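(* Fix $c > 0$. For a set $L \subset [k+\ell-2]$ with $|L| = \ell - 1$ (where $\ell,k \in \mathbb{N}$), define $$m(L) = \max\big\{ 1 \le m \le k+\ell-2 \,:\, |L \cap [m]| \le c \log m \text{ or } [m] \subset L \big\},$$ $$\ell'(L) = |L \cap [m(L)]| + 1, \qquad k'(L) = m(L) - \ell'(L) + 2.$$ Then for every $\ell, k \in \mathbb{N}$, $$R(\ell,k) \le \sum_{L \in \binom{[k+\ell-2]}{\ell-1}} \binom{k'(L)+\ell'(L)-2}{\ell'(L)-1}^{-1} R\big(\ell'(L), k'(L)\big).$$
   Context: $[m] = \{1,\dots,m\}$, and $\binom{[N]}{j}$ denotes the family of $j$-element subsets of $[N]$. $\log$ is the natural logarithm. For $\ell,k \in \mathbb{N}$, the Ramsey number $R(\ell,k)$ is the smallest $n \in \mathbb{N}$ such that every red-blue colouring of the edges of the complete graph $K_n$ contains either a red copy of $K_\ell$ or a blue copy of $K_k$; by convention $R(1,k) = R(\ell,1) = 1$. *)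

(* Defs.v *)
From HB Require Import structures.
From mathcomp Require Import all_boot all_order all_algebra.
From mathcomp Require Import all_classical all_reals all_analysis.
From Stdlib Require Import ClassicalEpsilon.
Set Implicit Arguments. Unset Strict Implicit. Unset Printing Implicit Defensive.
Import Order.TTheory GRing.Theory Num.Theory.

(* A red/blue colouring of the edges of K_n on vertex set 'I_n: the edge {x,y}
   with x < y gets colour f (x, y) (true = red, false = blue). *)
Definition red_clique n (f : {ffun 'I_n * 'I_n -> bool}) (S : {set 'I_n}) : bool :=
  [forall x in S, forall y in S, (x < y)%N ==> f (x, y)].
Definition blue_clique n (f : {ffun 'I_n * 'I_n -> bool}) (S : {set 'I_n}) : bool :=
  [forall x in S, forall y in S, (x < y)%N ==> ~~ f (x, y)].

Definition ramsey_prop (l k n : nat) : bool :=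
  [forall f : {ffun 'I_n * 'I_n -> bool},
     [exists S : {set 'I_n}, (#|S| == l) && red_clique f S]
  || [exists S : {set 'I_n}, (#|S| == k) && blue_clique f S]].

(* R(l,k): the least such n (Ramsey's theorem guarantees existence;
   the fallback 0 is never used for l, k >= 1). *)
Definition ramsey (l k : nat) : nat :=
  match excluded_middle_informative (exists n, ramsey_prop l k n) with
  | left H => ex_minn H
  | right _ => 0%N
  end.

Section MLK.
Variables (R : realType) (c : R).
Local Open Scope ring_scope.

(* [N] = {1,..,N} is represented by 'I_N via i |-> i+1, so
   L \cap [m] corresponds to {i in L | i < m}. *)
Definition capm N (L : {set 'I_N}) (m : nat) : {set 'I_N} :=
  [set i in L | (i < m)%N].

(* m(L) = max{1 <= m <= N : |L cap [m]| <= c log m or [m] subset L}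
   (with max of the empty set = 0, relevant only when N = 0). *)
Definition mL N (L : {set 'I_N}) : nat :=
  \max_(m < N.+1 | (1 <= m)%N &&
      (((#|capm L m|)%:R <= c * ln (m%:R : R))
       || [forall i : 'I_N, (i < m)%N ==> (i \in L)])) (m : nat).

Definition lL N (L : {set 'I_N}) : nat := (#|capm L (mL L)|).+1.
(* k'(L) = m(L) - l'(L) + 2 ; note l'(L) <= m(L) + 1 so this is >= 1 *)
Definition kL N (L : {set 'I_N}) : nat := ((mL L).+2 - lL L)%N.
End MLK.

(* Main.v *)
Require Import Defs.
From HB Require Import structures.
From mathcomp Require Import all_boot all_order all_algebra.
From mathcomp Require Import all_classical all_reals all_analysis.
From mathcomp Require Import zify.
From Stdlib Require Import ClassicalEpsilon.
Import Order.TTheory GRing.Theory Num.Theory.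

Local Notation subsetP := fintype.subsetP.
Local Notation set0 := finset.set0.
Local Notation setD1K := finset.setD1K.
Local Notation sub1set := finset.sub1set.
Local Notation subUset := finset.subUset.
Local Notation subset_trans := fintype.subset_trans.

Set Implicit Arguments. Unset Strict Implicit. Unset Printing Implicit Defensive.

Definition symc n (f : {ffun 'I_n * 'I_n -> bool}) (x y : 'I_n) : bool :=
  if (x < y)%N then f (x, y) else f (y, x).

Lemma symc_sym n (f : {ffun 'I_n * 'I_n -> bool}) x y : symc f x y = symc f y x.
Proof.
rewrite /symc; case: (ltngtP x y) => // /val_inj -> //.
Qed.

Definition good (T : finType) (g : T -> T -> bool) (l k : nat) (V : {set T}) : Prop :=
  (exists S : {set T}, [/\ S \subset V, #|S| = l &
      forall x y, x \in S -> y \in S -> x != y -> g x y])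
  \/ (exists S : {set T}, [/\ S \subset V, #|S| = k &
      forall x y, x \in S -> y \in S -> x != y -> ~~ g x y]).

Lemma red_cliqueP n (f : {ffun 'I_n * 'I_n -> bool}) S :
  red_clique f S -> forall x y, x \in S -> y \in S -> (x < y)%N -> f (x, y).
Proof.
move=> /forall_inP H x y xS yS lt; have /forall_inP H2 := H x xS.
exact: (implyP (H2 y yS) lt).
Qed.

Lemma blue_cliqueP n (f : {ffun 'I_n * 'I_n -> bool}) S :
  blue_clique f S -> forall x y, x \in S -> y \in S -> (x < y)%N -> ~~ f (x, y).
Proof.
move=> /forall_inP H x y xS yS lt; have /forall_inP H2 := H x xS.
exact: (implyP (H2 y yS) lt).
Qed.

Lemma transfer (T : finType) (g : T -> T -> bool)
  (gsym : forall x y, g x y = g y x) l k m (V : {set T}) :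
  ramsey_prop l k m -> (m <= #|V|)%N -> good g l k V.
Proof.
move=> Hr Hm.
pose h (i : 'I_m) : T := enum_val (widen_ord Hm i).
have hinj : injective h.
  by move=> i j /enum_val_inj /(congr1 val) /= /val_inj.
have hV : forall i, h i \in V by move=> i; exact: enum_valP.
pose f' := [ffun p : 'I_m * 'I_m => g (h p.1) (h p.2)].
move/forallP: Hr => /(_ f') /orP [/existsP [S /andP [/eqP cS rS]]
                                  | /existsP [S /andP [/eqP cS bS]]].
- left; exists (h @: S); split.
  + by apply/subsetP => _ /imsetP [i _ ->]; exact: hV.
  + by rewrite card_imset.
  + move=> _ _ /imsetP [i iS ->] /imsetP [j jS ->] neq.
    case: (ltngtP i j) => [ij|ji|/val_inj eij].
    * by have := red_cliqueP rS iS jS ij; rewrite ffunE.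
    * by have := red_cliqueP rS jS iS ji; rewrite ffunE gsym.
    * by rewrite eij eqxx in neq.
- right; exists (h @: S); split.
  + by apply/subsetP => _ /imsetP [i _ ->]; exact: hV.
  + by rewrite card_imset.
  + move=> _ _ /imsetP [i iS ->] /imsetP [j jS ->] neq.
    case: (ltngtP i j) => [ij|ji|/val_inj eij].
    * by have := blue_cliqueP bS iS jS ij; rewrite ffunE.
    * by have := blue_cliqueP bS jS iS ji; rewrite ffunE gsym.
    * by rewrite eij eqxx in neq.
Qed.

Lemma of_good l k n :
  (forall f : {ffun 'I_n * 'I_n -> bool}, good (symc f) l k [set: 'I_n]) ->
  ramsey_prop l k n.
Proof.
move=> H; apply/forallP => f.
case: (H f) => [[S [_ cS rS]]|[S [_ cS bS]]]; apply/orP; [left|right];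
  apply/existsP; exists S; rewrite cS eqxx /=;
  apply/forall_inP => x xS; apply/forall_inP => y yS; apply/implyP => xy.
- have := rS x y xS yS; rewrite /symc xy; apply.
  by apply/eqP => exy; rewrite exy ltnn in xy.
- have := bS x y xS yS; rewrite /symc xy; apply.
  by apply/eqP => exy; rewrite exy ltnn in xy.
Qed.

Lemma step (T : finType) (g : T -> T -> bool)
  (gsym : forall x y, g x y = g y x) l k a b (V : {set T}) :
  ramsey_prop l k.+1 a -> ramsey_prop l.+1 k b ->
  (a + b <= #|V|)%N -> (0 < #|V|)%N -> good g l.+1 k.+1 V.
Proof.
move=> Ha Hb HV V0.
have [v vV] : exists v, v \in V by apply/set0Pn; rewrite -card_gt0.
pose Rn := (V :\ v) :&: [set u | g v u].
pose Bn := (V :\ v) :\: [set u | g v u].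
have Rm u : u \in Rn -> [/\ u != v, u \in V & g v u].
  by rewrite !inE => /andP [/andP [? ?] ?].
have Bm u : u \in Bn -> [/\ u != v, u \in V & ~~ g v u].
  by rewrite !inE => /andP [? /andP [? ?]].
have cRB : (#|Rn| + #|Bn|)%N = #|V :\ v| by rewrite cardsID.
have cV := cardsD1 v V; rewrite vV in cV.
have : (a <= #|Rn|)%N || (b <= #|Bn|)%N.
  case: leqP => //= ?; case: leqP => //= ?; lia.
case/orP => [HR|HB].
- case: (transfer gsym Ha HR) => [[S [sS cS rS]]|[S [sS cS bS]]].
  + have vS : v \notin S.
      by apply/negP => /(subsetP sS) /Rm [/eqP].
    left; exists (v |: S); split.
    * apply/subsetP => u; rewrite in_setU1 => /orP [/eqP->//| uS].
      by have [] := Rm u (subsetP sS u uS).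
    * by rewrite cardsU1 cS vS.
    * move=> x y; rewrite !in_setU1 => /orP [/eqP->|xS] /orP [/eqP->|yS] nxy.
      -- by rewrite eqxx in nxy.
      -- by have [] := Rm y (subsetP sS y yS).
      -- by rewrite gsym; have [] := Rm x (subsetP sS x xS).
      -- exact: rS.
  + right; exists S; split => //.
    apply/subsetP => u /(subsetP sS) uR; by have [] := Rm u uR.
- case: (transfer gsym Hb HB) => [[S [sS cS rS]]|[S [sS cS bS]]].
  + left; exists S; split => //.
    apply/subsetP => u /(subsetP sS) uR; by have [] := Bm u uR.
  + have vS : v \notin S.
      by apply/negP => /(subsetP sS) /Bm [/eqP].
    right; exists (v |: S); split.
    * apply/subsetP => u; rewrite in_setU1 => /orP [/eqP->//| uS].
      by have [] := Bm u (subsetP sS u uS).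
    * by rewrite cardsU1 cS vS.
    * move=> x y; rewrite !in_setU1 => /orP [/eqP->|xS] /orP [/eqP->|yS] nxy.
      -- by rewrite eqxx in nxy.
      -- by have [] := Bm y (subsetP sS y yS).
      -- by rewrite gsym; have [] := Bm x (subsetP sS x xS).
      -- exact: bS.
Qed.

Lemma ramsey_step l k a b :
  ramsey_prop l k.+1 a -> ramsey_prop l.+1 k b -> (0 < a + b)%N ->
  ramsey_prop l.+1 k.+1 (a + b).
Proof.
move=> Ha Hb H0; apply: of_good => f.
apply: (step (@symc_sym _ f) Ha Hb); by rewrite cardsT card_ord.
Qed.

Lemma rp0l k n : ramsey_prop 0 k n.
Proof.
apply/forallP => f; apply/orP; left; apply/existsP; exists set0.
rewrite cards0 eqxx /=; apply/forall_inP => x; by rewrite inE.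
Qed.

Lemma rpl0 l n : ramsey_prop l 0 n.
Proof.
apply/forallP => f; apply/orP; right; apply/existsP; exists set0.
rewrite cards0 eqxx /=; apply/forall_inP => x; by rewrite inE.
Qed.

Lemma rp_mono l k m n : ramsey_prop l k m -> (m <= n)%N -> ramsey_prop l k n.
Proof.
move=> H mn; apply: of_good => f; apply: (transfer (@symc_sym _ f) H).
by rewrite cardsT card_ord.
Qed.

Lemma rp_ex l k : exists n, ramsey_prop l k n.
Proof.
elim: l k => [|l IHl] k; first by exists 0%N; apply: rp0l.
elim: k => [|k IHk]; first by exists 0%N; apply: rpl0.
case: (IHl k.+1) => a Ha; case: IHk => b Hb.
exists (a.+1 + b)%N; apply: ramsey_step => //; exact: rp_mono Ha _.
Qed.

Lemma ramseyP l k : ramsey_prop l k (ramsey l k) /\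
  forall n, ramsey_prop l k n -> (ramsey l k <= n)%N.
Proof.
rewrite /ramsey; case: excluded_middle_informative => [H|H]; last first.
  by case: H; apply: rp_ex.
case: ex_minnP => m Hm Hmin; split => //.
Qed.

Lemma ramsey_ge1 l k : (0 < l)%N -> (0 < k)%N -> (0 < ramsey l k)%N.
Proof.
move=> l0 k0; have [H _] := ramseyP l k; rewrite lt0n; apply/eqP => E.
rewrite E in H; move/forallP: H => /(_ [ffun => true]) /orP
  [/existsP [S /andP [/eqP cS _]] | /existsP [S /andP [/eqP cS _]]];
  have := max_card S; rewrite card_ord; lia.
Qed.

Lemma ramsey_rec l k : (0 < l)%N ->
  (ramsey l.+1 k.+1 <= ramsey l k.+1 + ramsey l.+1 k)%N.
Proof.
move=> l0; have [Ha _] := ramseyP l k.+1; have [Hb _] := ramseyP l.+1 k.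
have [_ Hmin] := ramseyP l.+1 k.+1.
apply: Hmin; apply: ramsey_step => //.
by rewrite addn_gt0 ramsey_ge1.
Qed.

Section Key.
Local Open Scope ring_scope.
Variables (R : realType) (c : R) (hc : 0 < c) (N : nat).

Definition cond (L : {set 'I_N}) (m : nat) : bool :=
  (1 <= m)%N && (((#|capm L m|)%:R <= c * ln (m%:R : R))
       || [forall i : 'I_N, (i < m)%N ==> (i \in L)]).

Definition mLb (L : {set 'I_N}) (b : nat) : nat :=
  \max_(m < b.+1 | cond L m) (m : nat).

Lemma mL_eq L : mL c L = mLb L N. Proof. by []. Qed.

Definition Hv (L : {set 'I_N}) (m : nat) : R :=
  ('C(m, #|capm L m|)%:R)^-1 * (ramsey (#|capm L m|).+1 (m.+1 - #|capm L m|))%:R.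
Definition Gb L b := Hv L (mLb L b).
Definition Bs (b : nat) : {set 'I_N} := [set i : 'I_N | (i < b)%N].
Definition P (b j : nat) : bool :=
  (0 < b)%N && ((j%:R <= c * ln (b%:R : R)) || (j == b)).

Lemma mLb_le L b : (mLb L b <= b)%N.
Proof. apply/bigmax_leqP => i _; rewrite -ltnS; exact: ltn_ord. Qed.

Lemma mLb_S L b : mLb L b.+1 = if cond L b.+1 then b.+1 else mLb L b.
Proof.
rewrite /mLb [in LHS]big_mkcond big_ord_recr /= -big_mkcond /=.
case: ifP => _; last exact: maxn0.
apply/maxn_idPr; exact: leqW (mLb_le _ _).
Qed.

Lemma mLb_0 L : mLb L 0 = 0%N.
Proof. by rewrite /mLb big_mkcond big_ord1. Qed.

Lemma card_Bs b : (b <= N)%N -> #|Bs b| = b.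
Proof.
move=> bN.
have -> : Bs b = [set widen_ord bN i | i in [set: 'I_b]].
  apply/setP => i; rewrite inE; apply/idP/imsetP => [ib|[j _ ->]].
    by exists (Ordinal ib) => //; apply: val_inj.
  by rewrite /= ltn_ord.
rewrite card_imset ?cardsT ?card_ord //.
by move=> i j /(congr1 val) /= /val_inj.
Qed.

Lemma capm_le (L : {set 'I_N}) m : (#|capm L m| <= m)%N.
Proof.
case: (leqP m N) => mN.
  rewrite -{2}(card_Bs mN); apply: subset_leq_card; apply/subsetP => i.
  by rewrite !inE => /andP [].
apply: leq_trans (max_card _) _; rewrite card_ord; exact: ltnW.
Qed.

Lemma capm_full (L : {set 'I_N}) b : L \subset Bs b -> capm L b = L.
Proof.
move=> sL; apply/setP => i; rewrite inE; case iL: (i \in L) => //=.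
by have := subsetP sL i iL; rewrite inE.
Qed.

Lemma cond_P (L : {set 'I_N}) b j : (b <= N)%N -> L \subset Bs b -> #|L| = j -> cond L b = P b j.
Proof.
move=> bN sL cL; rewrite /cond /P capm_full // cL.
congr (_ && (_ || _)); apply/forallP/eqP.
- move=> H; apply/eqP; rewrite eqn_leq; apply/andP; split.
    by rewrite -cL -(card_Bs bN); apply: subset_leq_card.
  rewrite -cL -(card_Bs bN); apply: subset_leq_card; apply/subsetP => i.
  by rewrite inE => ib; exact: (implyP (H i) ib).
- move=> jb.
  have E : L = Bs b by apply/eqP; rewrite eqEcard sL cL card_Bs // jb leqnn.
  by move=> i; apply/implyP => ib; rewrite E inE.
Qed.

Lemma mLb_stop (L : {set 'I_N}) b j : (b <= N)%N -> L \subset Bs b -> #|L| = j ->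
  (b == 0%N) || P b j -> mLb L b = b.
Proof.
case: b => [|b] bN sL cL /=; first by rewrite mLb_0.
by move=> HP; rewrite mLb_S (cond_P bN sL cL) HP.
Qed.

Lemma agree (L1 L2 : {set 'I_N}) b : (forall i : 'I_N, (i < b)%N -> (i \in L1) = (i \in L2)) ->
  Gb L1 b = Gb L2 b.
Proof.
move=> H.
have capE m : (m <= b)%N -> capm L1 m = capm L2 m.
  move=> mb; apply/setP => i; rewrite !inE; case: (ltnP i m) => im.
    by rewrite H // (leq_trans im mb).
  by rewrite !andbF.
have condE m : (m <= b)%N -> cond L1 m = cond L2 m.
  move=> mb; rewrite /cond capE //; congr (_ && (_ || _)).
  apply: eq_forallb => i; case: (ltnP i m) => // im.
  by rewrite /= H // (leq_trans im mb).
have mE : mLb L1 b = mLb L2 b.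
  apply: eq_bigl => i; apply: condE; rewrite -ltnS; exact: ltn_ord.
by rewrite /Gb mE /Hv capE // -mE mLb_le.
Qed.

Lemma stop_case b j : (b <= N)%N -> (j <= b)%N -> (b == 0%N) || P b j ->
  \sum_(L : {set 'I_N} | (L \subset Bs b) && (#|L| == j)) Gb L b
  = (ramsey j.+1 (b.+1 - j))%:R.
Proof.
move=> bN jb Hs.
rewrite (eq_bigr (fun _ => ('C(b,j)%:R)^-1 * (ramsey j.+1 (b.+1 - j))%:R)); last first.
  move=> L /andP [sL /eqP cL]; rewrite /Gb (mLb_stop bN sL cL Hs) /Hv capm_full // cL.
  by [].
rewrite sumr_const.
have -> : #|[pred L : {set 'I_N} | (L \subset Bs b) && (#|L| == j)]| = 'C(b, j).
  rewrite -{2}(card_Bs bN) -cards_draws; apply: eq_card => L; by rewrite inE.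
rewrite -mulrnAl -(mulr_natr (('C(b, j))%:R^-1)) mulVf ?mul1r // pnatr_eq0 -lt0n bin_gt0 //.
Qed.

Lemma LBS b (bN : (b < N)%N) (L : {set 'I_N}) :
  (L \subset Bs b.+1) && (Ordinal bN \notin L) = (L \subset Bs b).
Proof.
apply/idP/idP.
- case/andP => s1 xL; apply/subsetP => i iL; have := subsetP s1 i iL.
  rewrite !inE ltnS leq_eqVlt => /orP [/eqP ib|//]; exfalso; move: xL.
  by rewrite (_ : Ordinal bN = i) ?iL //; apply: val_inj.
- move=> s; apply/andP; split.
    apply: (subset_trans s); apply/subsetP => i; rewrite !inE; exact: ltnW.
  by apply/negP => xL; have := subsetP s _ xL; rewrite inE ltnn.
Qed.

Lemma key b : (b <= N)%N -> forall j, (j <= b)%N ->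
  (ramsey j.+1 (b.+1 - j))%:R <=
  \sum_(L : {set 'I_N} | (L \subset Bs b) && (#|L| == j)) Gb L b.
Proof.
elim: b => [|b IH] bN j jb; first by rewrite stop_case.
case: (boolP (P b.+1 j)) => HP; first by rewrite stop_case // HP orbT.
have /norP [H1 H2] : ~~ ((j%:R <= c * ln (b.+1%:R : R)) || (j == b.+1)).
  by move: HP; rewrite /P ltn0Sn andTb.
have j0 : (0 < j)%N.
  have h0 : 0 <= c * ln (b.+1%:R : R).
    by apply: mulr_ge0; [exact: ltW | apply: ln_ge0; rewrite ler1n].
  rewrite lt0n; apply/eqP => j0; move: H1; by rewrite j0 h0.
have jb' : (j <= b)%N by move: jb H2; rewrite leq_eqVlt => /orP [->|].
rewrite (eq_bigr (fun L => Gb L b)); last first.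
  move=> L /andP [sL /eqP cL]; by rewrite /Gb mLb_S (cond_P bN sL cL) (negbTE HP).
pose x : 'I_N := Ordinal bN.
rewrite (bigID (fun L : {set 'I_N} => x \in L)) /=.
have E2 : \sum_(L : {set 'I_N} | ((L \subset Bs b.+1) && (#|L| == j)) && (x \notin L)) Gb L b
        = \sum_(L : {set 'I_N} | (L \subset Bs b) && (#|L| == j)) Gb L b.
  apply: eq_bigl => L; rewrite -(LBS bN).
  by case: (L \subset _); case: (#|L| == j); case: (x \in L).
have E1 : \sum_(L : {set 'I_N} | ((L \subset Bs b.+1) && (#|L| == j)) && (x \in L)) Gb L b
        = \sum_(L : {set 'I_N} | (L \subset Bs b) && (#|L| == j.-1)) Gb L b.
  rewrite (reindex_onto (fun L' => x |: L') (fun L => L :\ x)) /=; last first.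
    by move=> L /andP [_ xL]; rewrite setD1K.
  apply: eq_big => L'.
  - have -> : ((x |: L') :\ x == L') = (x \notin L').
      apply/eqP/idP => [<-|xL]; [by rewrite setD11 | by rewrite setU1K].
    case xL: (x \in L') => /=.
      rewrite andbF; symmetry; apply/negbTE; apply/negP => /andP [s _].
      by have := subsetP s _ xL; rewrite inE ltnn.
    rewrite setU11 andbT cardsU1 xL add1n.
    rewrite subUset sub1set inE ltnSn /=.
    rewrite andbT -(LBS bN L') (_ : (Ordinal bN \in L') = false) // andbT.
    by case: (j) j0 => // j' _; rewrite eqSS.
  - move=> _; apply: agree => i ib; rewrite in_setU1.
    suff -> : (i == x) = false by [].
    by apply/negbTE/eqP => ix; rewrite ix /= ltnn in ib.
rewrite E1 E2.
have IH1 := IH (ltnW bN) j.-1 (leq_trans (leq_pred j) jb').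
have IH2 := IH (ltnW bN) j jb'.
case: j j0 jb jb' HP H1 H2 IH1 IH2 E1 E2 => // j' _ jb jb' _ _ H2 IH1 IH2 _ _.
apply: le_trans (lerD IH1 IH2); rewrite -natrD ler_nat /=.
have -> : (b.+2 - j'.+1 = (b - j').+1)%N by lia.
have -> : (b.+1 - j' = (b - j').+1)%N by lia.
have -> : (b.+1 - j'.+1 = b - j')%N by lia.
have [k1 ->] : exists k1, (b - j')%N = k1.+1 by exists (b - j').-1; lia.
exact: ramsey_rec.
Qed.

End Key.

Local Open Scope ring_scope.

Theorem lemma6p2 (R : realType) (c : R) (hc : 0 < c) (l k : nat)
  (hl : (0 < l)%N) (hk : (0 < k)%N) :
  ((ramsey l k)%:R : R) <=
  \sum_(L : {set 'I_(k + l - 2)} | #|L| == (l - 1)%N)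
     ('C(kL c L + lL c L - 2, lL c L - 1)%:R)^-1 * (ramsey (lL c L) (kL c L))%:R.
Proof.
have lN : (l - 1 <= k + l - 2)%N by lia.
have := @key R c hc (k + l - 2) (k + l - 2) (leqnn _) (l - 1)%N lN.
have -> : ((l - 1).+1 = l)%N by lia.
have -> : ((k + l - 2).+1 - (l - 1) = k)%N by lia.
move=> H; apply: (le_trans H); rewrite le_eqVlt; apply/orP; left; apply/eqP.
apply: eq_big => L.
  have -> : L \subset Bs (k + l - 2) (k + l - 2) by apply/subsetP => i _; rewrite inE ltn_ord.
  by [].
move=> _; rewrite /Gb /Hv /kL /lL mL_eq.
have := capm_le L (mLb c L (k + l - 2)).
set m := mLb _ _ _; set j := #|_|; move=> jm.
have -> : (m.+2 - j.+1 + j.+1 - 2 = m)%N by lia.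
have -> : (j.+1 - 1 = j)%N by lia.
have -> : (m.+2 - j.+1 = m.+1 - j)%N by lia.
by [].
Qed.
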